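(* Let $K$ be a commutative ring of characteristic $0$ with unit and $M$ a multiplicative $\mathbb{R}$-vector subspace of $\mathcal{H}^{>0}$. Let $F=G(m_0,\dots,m_k)$ be an $M$-generalized power series over $K$ with generating monomials $m_0,\dots,m_k$, and assume that the $m_i$ are pairwise comparable. Then $F$ has $\langle m_0,\dots,m_k\rangle^\times$-natural support, i.e. for every $p\in\langle m_0,\dots,m_k\rangle^\times$ the set $\operatorname{supp}(F)\cap(p,+\infty)$ is finite.
   Context: $\mathcal{H}$ is the Hardy field of germs at $+\infty$ of unary functions definable in $\mathbb{R}_{\mathrm{an},\exp}$, totally ordered by eventual comparison. $\langle m_0,\dots,m_k\rangle^\times$ is the multiplicative $\mathbb{R}$-vector space generated by $m_0,\dots,m_k$, i.e. $\{m_0^{r_0}\cdots m_k^{r_k}:r_i\in\mathbb{R}\}$. Germs $f,g$ are comparable if there are $r,s>0$ with $|f|^r<|g|<|f|^s$ eventually. An $M$-generalized power series over $K$ with generating monomials $m_0,\dots,m_k$ is a series $G(m_0,\dots,m_k)=\sum_{n\in M}\big(\sum_{\alpha\in\operatorname{supp}G,\,m^\alpha=n}a_\alpha\big)n$ in the ring $K((M))$ of formal series with anti-well-ordered support, where $m_0,\dots,m_k\in M$ are small (tend to $0$) and $G=\sum_\alpha a_\alpha X^\alpha$ is a generalized power series over $K$ in $X_0,\dots,X_k$ (support in a product of well-ordered subsets of $[0,\infty)$) with natural support (for each $a>0$ and each $i$, $[0,a)\cap\Pi_i(\operatorname{supp}G)$ is finite). $\operatorname{supp}(F)$ is the set of $n\in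 M$ with nonzero coefficient. *)

(* Defs.v *)
From HB Require Import structures.
From mathcomp Require Import all_boot all_order all_algebra.
From mathcomp Require Import boolp classical_sets functions cardinality fsbigop.
From mathcomp Require Import reals sequences exp.
Set Implicit Arguments. Unset Strict Implicit. Unset Printing Implicit Defensive.
Import Order.TTheory GRing.Theory Num.Theory.
Local Open Scope classical_set_scope.
Local Open Scope ring_scope.

(* Germs at +oo of real functions, represented by functions R -> R.    *)
Definition eventually (R : realType) (P : R -> Prop) : Prop :=
  exists a : R, forall x, a < x -> P x.
Definition germ_eq (R : realType) (f g : R -> R) : Prop :=
  eventually (fun x => f x = g x).
Definition germ_lt (R : realType) (f g : R -> R) : Prop :=
  eventually (fun x => f x < g x).

Definition ps_term (R : realType) (n : nat) (c : ('I_n -> nat) -> R)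
  (x y : 'I_n -> R) (b : 'I_n -> nat) : R :=
  c b * \prod_(i < n) (y i - x i) ^+ b i.

Definition box_psum (R : realType) (n : nat) (c : ('I_n -> nat) -> R)
  (x y : 'I_n -> R) (N : nat) : R :=
  \sum_(b : {ffun 'I_n -> 'I_N}) ps_term c x y (fun i => nat_of_ord (b i)).
Definition box_abssum (R : realType) (n : nat) (c : ('I_n -> nat) -> R)
  (x y : 'I_n -> R) (N : nat) : R :=
  \sum_(b : {ffun 'I_n -> 'I_N}) `|ps_term c x y (fun i => nat_of_ord (b i))|.

Definition analytic_at (R : realType) (n : nat) (g : ('I_n -> R) -> R)
  (x : 'I_n -> R) : Prop :=
  exists (c : ('I_n -> nat) -> R) (r : R), 0 < r /\
    forall y : 'I_n -> R, (forall i, `|y i - x i| < r) ->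
      (exists B : R, forall N, box_abssum c x y N <= B) /\
      (forall e : R, 0 < e -> exists N0 : nat, forall N : nat,
          (N0 <= N)%N -> `|box_psum c x y N - g y| < e).

Definition restricted_analytic (R : realType) (n : nat)
  (f : ('I_n -> R) -> R) : Prop :=
  exists (g : ('I_n -> R) -> R) (eps : R), 0 < eps /\
    (forall x : 'I_n -> R, (forall i, `|x i| < 1 + eps) -> analytic_at g x) /\
    (forall x : 'I_n -> R, f x = if [forall i, `|x i| <= 1] then g x else 0).

Record ranfun (R : realType) (n : nat) := RanFun {
  ranfun_val :> ('I_n -> R) -> R;
  ranfun_prop : restricted_analytic ranfun_val }.

(* First-order language of R_an,exp (with real constants = parameters) *)
Inductive term (R : realType) : Type :=
  | TVar of nat
  | TConst of R
  | TAdd of term R & term R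
  | TMul of term R & term R
  | TOpp of term R
  | TExp of term R
  | TRan (n : nat) (f : ranfun R n) (args : 'I_n -> term R).

Fixpoint teval (R : realType) (e : nat -> R) (t : term R) : R :=
  match t with
  | TVar i => e i
  | TConst c => c
  | TAdd t1 t2 => teval e t1 + teval e t2
  | TMul t1 t2 => teval e t1 * teval e t2
  | TOpp t1 => - teval e t1
  | TExp t1 => expR (teval e t1)
  | TRan n f args => f (fun i => teval e (args i))
  end.

Inductive formula (R : realType) : Type :=
  | FEq of term R & term R
  | FLt of term R & term R
  | FNot of formula R
  | FAnd of formula R & formula R
  | FEx of nat & formula R.

Fixpoint fsat (R : realType) (e : nat -> R) (phi : formula R) : Prop :=
  match phi with
  | FEq t u => teval e t = teval e u
  | FLt t u => teval e t < teval e u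
  | FNot p => ~ fsat e p
  | FAnd p q => fsat e p /\ fsat e q
  | FEx i p => exists r : R, fsat (fun j => if j == i then r else e j) p
  end.

(* f's germ at +oo lies in H: f restricted to some (a,+oo) is definable
   (with parameters) in R_an,exp; variable 0 = x, variable 1 = y.      *)
Definition in_H (R : realType) (f : R -> R) : Prop :=
  exists (phi : formula R) (a : R), forall x y : R, a < x ->
    (fsat (fun j => if j == 0%N then x else if j == 1%N then y else 0) phi
     <-> y = f x).

(* M : a multiplicative R-vector subspace of H^{>0}, as a germ-closed  *)
(* set of representatives.                                             *)
Definition mult_subspace (R : realType) (M : set (R -> R)) : Prop :=
  (forall f, M f -> in_H f /\ eventually (fun x => 0 < f x)) /\
  (forall f g, M f -> germ_eq f g -> M g) /\
  M (fun _ => 1) /\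
  (forall f g, M f -> M g -> M (fun x => f x * g x)) /\
  (forall f (r : R), M f -> M (fun x => f x `^ r)).

Definition small (R : realType) (f : R -> R) : Prop :=
  forall e : R, 0 < e -> eventually (fun x => `|f x| < e).

Definition germ_comparable (R : realType) (f g : R -> R) : Prop :=
  exists r s : R, 0 < r /\ 0 < s /\
    eventually (fun x => `|f x| `^ r < `|g x| /\ `|g x| < `|f x| `^ s).

Definition char0 (K : comNzRingType) : Prop :=
  forall n : nat, (n%:R : K) = 0 -> n = 0%N.

Definition mono (R : realType) (k : nat) (m : 'I_k.+1 -> R -> R)
  (al : 'I_k.+1 -> R) : R -> R :=
  fun x => \prod_(i < k.+1) (m i x `^ al i).

(* Generalized power series G = sum_alpha a_alpha X^alpha over K.      *)
Definition gsupp (R : realType) (K : comNzRingType) (k : nat)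
  (a : {ffun 'I_k.+1 -> R} -> K) : set {ffun 'I_k.+1 -> R} :=
  [set al | a al != 0].

Definition well_ordered (R : realType) (A : set R) : Prop :=
  forall B : set R, B `<=` A -> B !=set0 -> exists2 x, B x & forall y, B y -> x <= y.

Definition is_gps (R : realType) (K : comNzRingType) (k : nat)
  (a : {ffun 'I_k.+1 -> R} -> K) : Prop :=
  (exists S : 'I_k.+1 -> set R,
      (forall i, S i `<=` [set x | 0 <= x] /\ well_ordered (S i)) /\
      gsupp a `<=` [set al | forall i, S i (al i)]) /\
  (forall b : R, 0 < b -> forall i : 'I_k.+1,
      finite_set ([set al i | al in gsupp a] `&` [set x | 0 <= x < b])).

(* coefficient of the monomial (germ) n in F = G(m_0,...,m_k):
   sum of a_alpha over alpha in supp G with m^alpha = n (as germs).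
   (fsbig convention: 0 if this fibre were infinite.) *)
Definition gcoef (R : realType) (K : comNzRingType) (k : nat)
  (m : 'I_k.+1 -> R -> R) (a : {ffun 'I_k.+1 -> R} -> K) (n : R -> R) : K :=
  \sum_(al \in [set al | a al != 0 /\ germ_eq (mono m al) n]) a al.

Definition Fsupp (R : realType) (K : comNzRingType) (M : set (R -> R))
  (k : nat) (m : 'I_k.+1 -> R -> R) (a : {ffun 'I_k.+1 -> R} -> K) : set (R -> R) :=
  [set n | M n /\ gcoef m a n != 0].

(* Main.v *)
Require Import Defs.
From HB Require Import structures.
From mathcomp Require Import all_boot all_order all_algebra.
From mathcomp Require Import boolp classical_sets functions cardinality fsbigop.
From mathcomp Require Import reals sequences exp.
Import Order.TTheory GRing.Theory Num.Theory.
Local Open Scope classical_set_scope.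
Local Open Scope ring_scope.

Lemma ev_and (R : realType) (P Q : R -> Prop) :
  Defs.eventually P -> Defs.eventually Q -> Defs.eventually (fun x => P x /\ Q x).
Proof.
move=> [a ha] [b hb]; exists (`|a| + `|b|) => x hx; split.
- apply: ha; apply: le_lt_trans hx; apply: le_trans (ler_norm a) _; by rewrite lerDl.
- apply: hb; apply: le_lt_trans hx; apply: le_trans (ler_norm b) _; by rewrite lerDr.
Qed.

Arguments ev_and {R P Q}.

Lemma ev_all (R : realType) n (P : 'I_n -> R -> Prop) :
  (forall i, Defs.eventually (P i)) -> Defs.eventually (fun x => forall i, P i x).
Proof.
move=> h; case: (choice h) => f hf.
exists (\sum_i `|f i|) => x hx i; apply: hf; apply: le_lt_trans hx.
rewrite (bigD1 i) //=; apply: le_trans (ler_norm (f i)) _.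
by rewrite lerDl sumr_ge0.
Qed.

Lemma mono_exp (R : realType) (k : nat) (m : 'I_k.+1 -> R -> R) (v : 'I_k.+1 -> R) x :
  (forall i, 0 < m i x) -> mono m v x = expR (\sum_i v i * ln (m i x)).
Proof.
move=> hp; rewrite /mono expR_sum; apply: eq_bigr => i _.
by rewrite /powR gt_eqF.
Qed.

Theorem lemma5p4 (R : realType) (K : comNzRingType) (hK : char0 K)
  (M : set (R -> R)) (hM : mult_subspace M)
  (k : nat) (m : 'I_k.+1 -> R -> R)
  (hmM : forall i, M (m i)) (hms : forall i, small (m i))
  (a : {ffun 'I_k.+1 -> R} -> K) (ha : is_gps a)
  (hcomp : forall i j : 'I_k.+1, i != j -> germ_comparable (m i) (m j)) :
  forall p : R -> R,
    (exists r : 'I_k.+1 -> R, germ_eq p (mono m r)) ->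
    exists (N : nat) (q : 'I_N -> R -> R),
      forall n : R -> R, Fsupp M m a n -> germ_lt p n ->
        exists i : 'I_N, germ_eq n (q i).
Proof.
move=> p [r hpr].
have hpos : forall i, Defs.eventually (fun x => 0 < m i x).
  by move=> i; exact: (hM.1 _ (hmM i)).2.
have hlt1 : forall i, Defs.eventually (fun x => m i x < 1).
  move=> i; have [A hA] := hms i 1 ltr01; exists A => x /hA.
  exact: le_lt_trans (ler_norm _).
have hcC : forall j : 'I_k.+1, exists cC : R * R, 0 < cC.1 /\ 0 < cC.2 /\
    Defs.eventually (fun x => 0 < m ord0 x -> 0 < m j x ->
      cC.2 * ln (m ord0 x) <= ln (m j x) <= cC.1 * ln (m ord0 x)).
  move=> j; case: (eqVneq j ord0) => [->|hj].
    exists (1,1); split => //; split => //; exists 0 => x _ _ _.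
    by rewrite mul1r lexx.
  have [r0 [s0 [hr [hs [A hA]]]]] : germ_comparable (m ord0) (m j).
    by apply: hcomp; rewrite eq_sym.
  exists (s0, r0); split => //; split => //; exists A => x /hA [h1 h2] p0 pj /=.
  rewrite !gtr0_norm // in h1 h2.
  apply/andP; split; rewrite -ln_powR; apply/ltW; rewrite ltr_ln // posrE powR_gt0 //.
case: (choice hcC) => cC hcC'.
pose c j := (cC j).1. pose C j := (cC j).2.
have Eall : Defs.eventually (fun x => forall i, (0 < m i x /\ m i x < 1) /\
    (0 < m ord0 x -> 0 < m i x ->
      C i * ln (m ord0 x) <= ln (m i x) <= c i * ln (m ord0 x))).
  apply: ev_all => i; apply: ev_and; first exact: ev_and.
  by have [_ [_ h]] := hcC' i.
pose D := \sum_i `|r i| * C i.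
have cpos : forall j, 0 < c j by move=> j; have [h _] := hcC' j.
have Cpos : forall j, 0 < C j by move=> j; have [_ [h _]] := hcC' j.
have D0 : 0 <= D by apply: sumr_ge0 => i _; rewrite mulr_ge0 // ltW.
pose B j := D / c j + 1.
have B0 : forall j, 0 < B j.
  by move=> j; rewrite /B ltr_wpDl // divr_ge0 // ltW.
have hfin : forall j, exists s : seq R,
    [set al j | al in gsupp a] `&` [set x | 0 <= x < B j] = [set` s].
  by move=> j; apply/finite_seqP; exact: ha.2 (B j) (B0 j) j.
case: (choice hfin) => sq hsq.
pose S := flatten [seq sq j | j <- enum 'I_k.+1].
exists #|{ffun 'I_k.+1 -> 'I_(size S).+1}|.
exists (fun i => mono m [ffun j => nth 0 S
   (nat_of_ord ((enum_val i : {ffun 'I_k.+1 -> 'I_(size S).+1}) j))]).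
move=> n [Mn hco] hpn.
have [al [hal hgal]] : exists al, a al != 0 /\ germ_eq (mono m al) n.
  case: (pselect (exists al, a al != 0 /\ germ_eq (mono m al) n)) => // hno.
  exfalso; move/eqP: hco; apply; rewrite /gcoef.
  have -> : [set al | a al != 0 /\ germ_eq (mono m al) n] = set0.
    by apply/seteqP; split => al //= h; apply: hno; exists al.
  by rewrite fsbig_set0.
have al0 : forall j, 0 <= al j.
  have [[S0 [hS hsub]] _] := ha.
  by move=> j; have := hsub al hal j; move/(proj1 (hS j)).
have alB : forall j, al j < B j.
  have [A HA] := ev_and (ev_and Eall hpr) (ev_and hpn hgal).
  have hA1 : A < A + 1 by rewrite ltrDl.
  have [[hx hpx] [hlt hnx]] := HA (A + 1) hA1.
  set x := A + 1 in hx hpx hlt hnx.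
  have mp : forall i, 0 < m i x by move=> i; have [[]] := hx i.
  have l0 : ln (m ord0 x) < 0 by apply: ln_lt0; have [[-> ->]] := hx ord0.
  have hb : forall i, C i * ln (m ord0 x) <= ln (m i x) <= c i * ln (m ord0 x).
    by move=> i; have [_ h] := hx i; apply: h.
  rewrite hpx -hnx !mono_exp // ltr_expR in hlt.
  pose u := - ln (m ord0 x).
  have u0 : 0 < u by rewrite /u oppr_gt0.
  have Li : forall i, c i * u <= - ln (m i x) <= C i * u.
    move=> i; have /andP[h1 h2] := hb i.
    by rewrite /u !mulrN lerN2 h2 lerN2 h1.
  have Li0 : forall i, 0 <= - ln (m i x).
    move=> i; have /andP[h _] := Li i; apply: le_trans h.
    by rewrite mulr_ge0 // ltW.
  move=> j.
  have h1 : al j * (c j * u) <= \sum_i al i * - ln (m i x).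
    apply: le_trans (_ : al j * - ln (m j x) <= _).
      by apply: ler_wpM2l => //; have /andP[] := Li j.
    rewrite (bigD1 j) //= lerDl; apply: sumr_ge0 => i _; exact: mulr_ge0.
  have h2 : \sum_i r i * - ln (m i x) <= D * u.
    rewrite /D mulr_suml; apply: ler_sum => i _.
    apply: le_trans (_ : `|r i| * - ln (m i x) <= _).
      by apply: ler_wpM2r => //; exact: ler_norm.
    rewrite -mulrA; apply: ler_wpM2l => //; by have /andP[] := Li i.
  have h3 : \sum_i al i * - ln (m i x) < \sum_i r i * - ln (m i x).
    under eq_bigr do rewrite mulrN. under [X in _ < X]eq_bigr do rewrite mulrN.
    by rewrite !sumrN ltrN2.
  have : al j * c j < D.
    rewrite -(ltr_pM2r u0) -mulrA.
    exact: le_lt_trans h1 (lt_le_trans h3 h2).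
  rewrite -ltr_pdivlMr // => h; apply: lt_le_trans h _; rewrite /B lerDl //.
have alS : forall j, al j \in S.
  move=> j; apply/flattenP; exists (sq j); first by apply: map_f; rewrite mem_enum.
  have : [set` sq j] (al j) by rewrite -hsq; split; [exists al | rewrite /= al0 alB].
  by [].
pose f : {ffun 'I_k.+1 -> 'I_(size S).+1} := [ffun j => inord (index (al j) S)].
exists (enum_rank f); rewrite enum_rankK.
have -> : [ffun j => nth 0 S (nat_of_ord (f j))] = al.
  apply/ffunP => j; rewrite !ffunE inordK ?nth_index //.
  by rewrite ltnS index_size.
case: hgal => A hA; exists A => x /hA ->. by [].
Qed.
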